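(* Let $m\in A^+$ be irreducible of degree $d$, let $f(u)\in\mathbb{F}_p[u]$ be monic irreducible with a root $\alpha$, and let $n_1,n_2\ge1$ be integers with $n_1\equiv n_2\pmod{q^d-1}$. Then $B_{n_1}^{\alpha}\equiv B_{n_2}^{\alpha}\pmod m$.
   Context: Let $q$ be a power of a prime $p$, $A=\mathbb{F}_q[T]$, and $A^+$ the set of monic polynomials in $A$. For integers $n\ge1$, $i\ge0$, set $s_i(n)=\sum_{a\in A^+,\ \deg a=i} a^n\in A$. Writing $n=\sum_j a_jq^j$ with $0\le a_j\le q-1$, let $l(n)=\sum_j a_j$; it is known that $s_i(n)=0$ whenever $i>l(n)/(q-1)$, so $C_n(u)=\sum_{i\ge0}s_i(n)u^i\in A[u]$. Define $B_n(u)=C_n(u)$ if $n\not\equiv 0\pmod{q-1}$, and $B_n(u)=C_n(u)/(1-u)=\sum_{i\ge0}\big(\sum_{j=0}^i s_j(n)\big)u^i$ if $n\equiv0\pmod{q-1}$ (this lies in $A[u]$ since $C_n(1)=0$ in that case). For $\alpha$ algebraic over $\mathbb{F}_p$, let $s=[\mathbb{F}_q(\alpha):\mathbb{F}_q]$ and let $\alpha_1,\dots,\alpha_s$ be the conjugates of $\alpha$ over $\mathbb{F}_q$; define $B_n^{\alpha}=N_{\mathbb{F}_{q^s}(T)/\mathbb{F}_q(T)}(B_n(\alpha))=\prod_{i=1}^s B_n(\alpha_i)\in A$. *)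

(* Defs.v *)
From HB Require Import structures.
From mathcomp Require Import all_boot all_order all_algebra all_fingroup all_field.
Set Implicit Arguments. Unset Strict Implicit. Unset Printing Implicit Defensive.
Import GRing.Theory.
Local Open Scope ring_scope.

(* F plays the role of F_q, A = {poly F}, q = #|F|. *)

(* The monic polynomial of degree i with lower coefficients c:
   T^i + c_{i-1} T^{i-1} + ... + c_0.  As c ranges over {ffun 'I_i -> F},
   this enumerates the monic polynomials of degree i bijectively. *)
Definition monic_of (F : finFieldType) (i : nat) (c : {ffun 'I_i -> F}) : {poly F} :=
  'X^i + \sum_(j < i) c j *: 'X^j.

Definition s_sum (F : finFieldType) (i n : nat) : {poly F} :=
  \sum_(c : {ffun 'I_i -> F}) (monic_of c) ^+ n.

(* C_n(u) = sum_i s_i(n) u^i  in A[u] = {poly {poly F}}.  The sum is truncated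
   at i <= n, which is harmless since s_i(n) = 0 for i > l(n)/(q-1) and
   l(n)/(q-1) <= l(n) <= n. *)
Definition Cpoly (F : finFieldType) (n : nat) : {poly {poly F}} :=
  \sum_(i < n.+1) (s_sum F i n)%:P * 'X^i.

(* B_n(u) = C_n(u) if (q-1) does not divide n, and
   C_n(u)/(1-u) = sum_i (sum_{j<=i} s_j(n)) u^i otherwise (again truncated at
   i <= n, harmless since C_n has degree <= n and C_n(1) = 0 in that case). *)
Definition Bpoly (F : finFieldType) (n : nat) : {poly {poly F}} :=
  if (#|F|.-1 %| n)%N then
    \sum_(i < n.+1) (\sum_(j < i.+1) s_sum F j n)%:P * 'X^i
  else Cpoly F n.

Definition Beval (F : finFieldType) (L : fieldExtType F) (n : nat) (x : L) : {poly L} :=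
  (map_poly (map_poly (in_alg L)) (Bpoly F n)).[x%:P].

(* B_n^alpha = N_{F_q(alpha)(T)/F_q(T)} (B_n(alpha)) = prod over the conjugates
   sigma(alpha), sigma in Gal(F_q(alpha)/F_q), of B_n(sigma alpha). *)
Definition Balpha (F : finFieldType) (L : splittingFieldType F) (n : nat) (a : L)
  : {poly L} :=
  \prod_(sigma in ('Gal(<<1; a>>%VS / 1%VS))%g) Beval n (sigma a).

(* Main.v *)
Require Import Defs.
From HB Require Import structures.
From mathcomp Require Import all_boot all_order all_algebra all_fingroup all_field.
From mathcomp Require Import qpoly qfpoly cyclic zify ring.
Import GRing.Theory FinRing.Theory.
Local Open Scope ring_scope.
Section S.
Variable F : finFieldType.

Definition gsum i (c : {ffun 'I_i -> F}) : {poly F} := \sum_(j < i) c j *: 'X^j.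

Definition ext i (p : F * {ffun 'I_i -> F}) : {ffun 'I_i.+1 -> F} :=
  [ffun j => if unlift ord_max j is Some k then p.2 k else p.1].
Definition res i (c : {ffun 'I_i.+1 -> F}) : F * {ffun 'I_i -> F} :=
  (c ord_max, [ffun k => c (lift ord_max k)]).

Arguments ext {i}.
Arguments gsum {i}.
Arguments res {i}.
Lemma extK i : cancel (@ext i) (@res i).
Proof.
case=> a c; rewrite /res /ext !ffunE unlift_none; congr (_, _).
by apply/ffunP=> k; rewrite !ffunE liftK.
Qed.

Lemma resK i : cancel (@res i) (@ext i).
Proof.
move=> c; apply/ffunP=> j; rewrite /ext /res ffunE.
by case: unliftP => [k ->|->] //=; rewrite ffunE.
Qed.

Lemma gsum_ext i a (c : {ffun 'I_i -> F}) : gsum (ext (a, c)) = a *: 'X^i + gsum c.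
Proof.
rewrite /gsum big_ord_recr /= addrC ffunE unlift_none; congr (_ + _).
apply: eq_bigr => j _; rewrite ffunE.
have -> : widen_ord (leqnSn i) j = lift ord_max j by apply: val_inj; rewrite /= /bump leqNgt ltn_ord.
by rewrite liftK.
Qed.

Lemma decomp i (Phi : {poly F} -> {poly F}) :
  \sum_(c : {ffun 'I_i.+1 -> F}) Phi (gsum c) =
  \sum_(a : F) \sum_(c : {ffun 'I_i -> F}) Phi (a *: 'X^i + gsum c).
Proof.
rewrite pair_big /= (reindex (@ext i)) /=; last by exists (@res i) => x _; [apply: extK|apply: resK].
by apply: eq_bigr => -[a c] _; rewrite gsum_ext.
Qed.

Lemma cardF0 : (#|F|%:R : F) = 0.
Proof. by rewrite -zmodXgE -cardsT expg_cardG ?inE. Qed.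

Lemma sum1F : \sum_(a : F) (1 : {poly F}) = 0.
Proof. by rewrite sumr_const -polyC_natr cardF0. Qed.

Lemma vanish i : forall (y : {poly F}) k, (k < i)%N ->
  \sum_(c : {ffun 'I_i -> F}) (y + gsum c) ^+ k = 0.
Proof.
elim: i => [//|i IH] y k ltki.
rewrite (decomp i (fun g => (y + g) ^+ k)) exchange_big /=.
transitivity (\sum_(c : {ffun 'I_i -> F}) \sum_(j < k.+1)
   \sum_(a : F) (y + gsum c) ^+ (k - j) * (a *: 'X^i) ^+ j *+ 'C(k, j)).
  apply: eq_bigr => c _; rewrite exchange_big /=; apply: eq_bigr => a _.
  by rewrite addrCA addrC exprDn.
rewrite exchange_big /= big1 // => j _.
transitivity (\sum_(c : {ffun 'I_i -> F}) (y + gsum c) ^+ (k - j) *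
   ((\sum_(a : F) (a *: 'X^i) ^+ j) *+ 'C(k, j))).
  by apply: eq_bigr => c _; rewrite mulrnAr mulr_sumr -sumrMnl.
rewrite -mulr_suml.
case: (posnP j) => [j0|jpos].
  by rewrite j0 (eq_bigr (fun a : F => 1)) ?sum1F ?mul0rn ?mulr0 // => a _; rewrite expr0.
rewrite IH ?mul0r //; move: (ltn_ord j) ltki jpos; lia.
Qed.

Lemma s_sumE i n : s_sum F i n = \sum_(c : {ffun 'I_i -> F}) ('X^i + gsum c) ^+ n.
Proof. by []. Qed.

Lemma s_vanish i n : (n < i)%N -> s_sum F i n = 0.
Proof. by move=> h; rewrite s_sumE vanish. Qed.

Lemma unit_pow (a : F) n : a != 0 -> (#|F|.-1 %| n)%N -> a ^+ n = 1.
Proof.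
move=> a0 /dvdnP[t ->].
have h : a ^+ #|F|.-1 = 1.
  apply: (mulfI a0); rewrite mulr1 -exprS prednK ?expf_card //.
  exact: (ltn_trans _ (finNzRing_gt1 F)).
by rewrite mulnC exprM h expr1n.
Qed.

Lemma sum_nonzero i n (a : F) : a != 0 -> (#|F|.-1 %| n)%N ->
  \sum_(c : {ffun 'I_i -> F}) (a *: 'X^i + gsum c) ^+ n = s_sum F i n.
Proof.
move=> a0 dn; rewrite s_sumE.
rewrite (reindex_inj (h := fun c : {ffun 'I_i -> F} => [ffun j => a * c j])) /=; last first.
  move=> c1 c2 /ffunP e; apply/ffunP => j; have := e j; rewrite !ffunE.
  exact: mulfI.
apply: eq_bigr => c _.
have -> : gsum [ffun j => a * c j] = a *: gsum c.
  rewrite /gsum scaler_sumr; apply: eq_bigr => j _; by rewrite ffunE scalerA.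
by rewrite -scalerDr exprZn unit_pow // scale1r.
Qed.

Lemma W_eq i n : (0 < n)%N -> (#|F|.-1 %| n)%N ->
  \sum_(c : {ffun 'I_i -> F}) (gsum c) ^+ n = - \sum_(j < i) s_sum F j n.
Proof.
move=> n0 dn; elim: i => [|i IH].
  rewrite big_ord0 oppr0 big1 // => c _.
  by rewrite /gsum big_ord0 expr0n eqn0Ngt n0.
rewrite (decomp i (fun g => g ^+ n)) /= (bigD1 0) //= scale0r.
rewrite (eq_bigr (fun c : {ffun 'I_i -> F} => (gsum c) ^+ n)); last by move=> c _; rewrite add0r.
rewrite IH (eq_bigr (fun _ => s_sum F i n)); last by move=> a a0; rewrite sum_nonzero.
have e : \sum_(a : F | a != 0) s_sum F i n = - s_sum F i n.
  have h1 : \sum_(a : F | a != 0) (1 : {poly F}) = -1.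
    have := sum1F; rewrite (bigD1 (0 : F)) //= => /eqP.
    by rewrite addrC addr_eq0 => /eqP.
  by rewrite -[in LHS](mul1r (s_sum F i n)) -mulr_suml h1 mulN1r.
by rewrite e big_ord_recr /= opprD.
Qed.

Definition bco n i : {poly F} :=
  if (#|F|.-1 %| n)%N then \sum_(j < i.+1) s_sum F j n else s_sum F i n.

Lemma bco_vanish n i : (0 < n)%N -> (n < i)%N -> bco n i = 0.
Proof.
move=> n0 ni; rewrite /bco; case: ifP => dn; last by apply: s_vanish.
apply: oppr_inj; rewrite oppr0 -W_eq //.
transitivity (\sum_(c : {ffun 'I_i.+1 -> F}) (0 + gsum c) ^+ n).
  by apply: eq_bigr => c _; rewrite add0r.
by apply: vanish; rewrite ltnS ltnW.
Qed.
Lemma Bpoly_eq n N : (0 < n)%N -> (n <= N)%N ->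
  Bpoly F n = \sum_(i < N.+1) (bco n i)%:P * 'X^i.
Proof.
move=> n0 nN.
have -> : Bpoly F n = \sum_(i < n.+1) (bco n i)%:P * 'X^i.
  by rewrite /Bpoly /bco /Cpoly; case: ifP.
rewrite (big_ord_widen N.+1 (fun i => (bco n i)%:P * 'X^i)) // big_mkcond /=.
apply: eq_bigr => i _; case: ifP => // h.
by rewrite bco_vanish ?mul0r // ltnNge -ltnS h.
Qed.
End S.

Lemma dvd_pred_exp q d : (0 < q)%N -> (q.-1 %| (q ^ d).-1)%N.
Proof.
move=> q0; have qd0 : (0 < q ^ d)%N by rewrite expn_gt0 q0.
rewrite -!subn1 -eqn_mod_dvd //.
have h : q = 1 %[mod q - 1] by rewrite -{1}(subnK q0) modnDl.
by rewrite -modnXm h modnXm exp1n.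
Qed.

Lemma fermat (K : finFieldType) (x : K) n1 n2 : (0 < n1)%N -> (0 < n2)%N ->
  n1 = n2 %[mod #|K|.-1] -> x ^+ n1 = x ^+ n2.
Proof.
move=> h1 h2 e; have [->|x0] := eqVneq x 0.
  by rewrite !expr0n eqn0Ngt h1 eqn0Ngt h2.
have u : x ^+ #|K|.-1 = 1 by apply: unit_pow => //.
by rewrite -(expr_mod n1 u) e expr_mod.
Qed.

Lemma bco_cong (F : finFieldType) (m : {poly F}) d n1 n2 i :
  m \is monic -> irreducible_poly m -> size m = d.+1 ->
  (0 < n1)%N -> (0 < n2)%N -> n1 = n2 %[mod (#|F| ^ d).-1] ->
  m %| bco F n1 i - bco F n2 i.
Proof.
move=> mon irr sm h1 h2 e.
have hI : monic_irreducible_poly m by split.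
have key : forall a : {poly F}, in_qpoly m (a ^+ n1) = in_qpoly m (a ^+ n2).
  move=> a; rewrite !rmorphXn.
  apply: (@fermat {poly %/ m with hI}) => //.
  by rewrite card_qfpoly sm.
have ss : forall j, in_qpoly m (s_sum F j n1) = in_qpoly m (s_sum F j n2).
  by move=> j; rewrite /s_sum !rmorph_sum; apply: eq_bigr => c _; apply: key.
have dq : (#|F|.-1 %| n1)%N = (#|F|.-1 %| n2)%N.
  have dd := dvd_pred_exp #|F| d (ltnW (finNzRing_gt1 F)).
  by rewrite /dvdn -(modn_dvdm n1 dd) -(modn_dvdm n2 dd) e.
have eq : in_qpoly m (bco F n1 i) = in_qpoly m (bco F n2 i).
  rewrite /bco dq; case: ifP => _; last exact: ss.
  by rewrite !rmorph_sum; apply: eq_bigr => j _; apply: ss.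
apply/modp_eq0P.
have := congr1 (@polyn _ _) (eq_trans (rmorphB _ _ _) (etrans (congr1 (fun x => x - _) eq) (subrr _))).
by rewrite /= mk_monicE // (Pdiv.IdomainMonic.modpE mon).
Qed.

Section Main.
Variables (F : finFieldType) (L : splittingFieldType F).
Local Notation phi := (map_poly (in_alg L)).

Lemma Beval_eq n N (x : L) : (0 < n)%N -> (n <= N)%N ->
  Beval n x = \sum_(i < N.+1) phi (bco F n i) * x%:P ^+ i.
Proof.
move=> n0 nN; rewrite /Beval (@Bpoly_eq F n N n0 nN) rmorph_sum horner_sum.
apply: eq_bigr => i _.
by rewrite rmorphM /= map_polyC map_polyXn hornerM hornerC hornerXn.
Qed.

Lemma Beval_cong (m : {poly F}) d n1 n2 (x : L) :
  m \is monic -> irreducible_poly m -> size m = d.+1 ->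
  (0 < n1)%N -> (0 < n2)%N -> n1 = n2 %[mod (#|F| ^ d).-1] ->
  phi m %| Beval n1 x - Beval n2 x.
Proof.
move=> mon irr sm h1 h2 e.
rewrite (@Beval_eq n1 (maxn n1 n2)) ?leq_maxl // (@Beval_eq n2 (maxn n1 n2)) ?leq_maxr //.
rewrite -sumrB; apply: (big_ind (fun y => phi m %| y)) => [|u v|i _]; first exact: dvdp0.
  exact: dvdp_add.
rewrite -mulrBl -rmorphB; apply: dvdp_mulr.
by rewrite dvdp_map; exact: (@bco_cong F m d n1 n2 i mon irr sm h1 h2 e).
Qed.

Lemma prod_cong (I : finType) (P : pred I) (q : {poly L}) (A B : I -> {poly L}) :
  (forall i, P i -> q %| A i - B i) ->
  q %| \prod_(i | P i) A i - \prod_(i | P i) B i.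
Proof.
move=> h; apply: (big_ind2 (fun x y => q %| x - y)) => //.
  by rewrite subrr dvdp0.
move=> x1 x2 y1 y2 hx hy.
have -> : x1 * y1 - x2 * y2 = x1 * (y1 - y2) + (x1 - x2) * y2 by ring.
by apply: dvdp_add; [exact: dvdp_mull | exact: dvdp_mulr].
Qed.

Lemma phi_polyOver (b : {poly F}) (K : {subfield L}) : phi b \is a polyOver K.
Proof.
apply: (polyOverS (subvP (sub1v K))); apply/polyOver1P; by exists b.
Qed.

Lemma Beval_polyOver n (K : {subfield L}) x : (0 < n)%N -> x \in K ->
  Beval n x \is a polyOver K.
Proof.
move=> n0 xK; rewrite (@Beval_eq n n) //.
apply: rpred_sum => i _; apply: rpredM; first exact: phi_polyOver.
by apply: rpredX; rewrite polyOverC.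
Qed.

Lemma map_Beval (E : {subfield L}) (t : gal_of E) n x : (0 < n)%N ->
  t \in 'Gal(E / 1%AS)%g -> map_poly t (Beval n x) = Beval n (t x).
Proof.
move=> n0 tG; rewrite !(@Beval_eq n n) // rmorph_sum; apply: eq_bigr => i _.
rewrite rmorphM rmorphXn /= map_polyC /=.
by rewrite (fixedPoly_gal (sub1v E) tG (phi_polyOver _ _)).
Qed.

Lemma Balpha_polyOver1 n (a : L) : (0 < n)%N -> Balpha n a \is a polyOver 1%VS.
Proof.
move=> n0.
pose E : {subfield L} := <<1; a>>%AS.
have aE : a \in E := memv_adjoin 1%VS a.
have Ep : Balpha n a \is a polyOver E.
  apply: rpred_prod => s _; apply: Beval_polyOver => //; exact: memv_gal.
have fixp : forall t, t \in 'Gal(E / 1%AS)%g -> map_poly t (Balpha n a) = Balpha n a.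
  move=> t tG; rewrite /Balpha rmorph_prod.
  rewrite (eq_bigr (fun s => Beval n ((s * t)%g a))); last first.
    by move=> s _; rewrite galM //; apply: map_Beval.
  rewrite [RHS](reindex_inj (mulIg t)) /=; apply: eq_bigl => s.
  by rewrite groupMr.

have /galois_fixedField fixE := finField_galois (sub1v E).
apply/polyOverP => i; rewrite -fixE; apply/fixedFieldP; first exact: (polyOverP Ep).
by move=> t tG; rewrite -{2}(fixp t tG) coef_map.
Qed.

End Main.

Theorem lemma5p1 (p : nat) (F : finFieldType) (L : splittingFieldType F)
  (m : {poly F}) (d : nat) (f : {poly 'F_p}) (alpha : L) (n1 n2 : nat) :
  prime p -> (p \in [pchar F])%N ->
  m \is monic -> irreducible_poly m -> size m = d.+1 ->
  f \is monic -> irreducible_poly f ->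
  root (map_poly (fun c : 'F_p => (nat_of_ord c)%:R : L) f) alpha ->
  (0 < n1)%N -> (0 < n2)%N ->
  n1 = n2 %[mod (#|F| ^ d).-1] ->
  exists b1 b2 : {poly F},
    [/\ map_poly (in_alg L) b1 = Balpha n1 alpha,
        map_poly (in_alg L) b2 = Balpha n2 alpha
      & m %| b1 - b2].
Proof.
move=> _ _ mon irr sm _ _ _ h1 h2 e.
have [b1 e1] := polyOver1P (@Balpha_polyOver1 F L n1 alpha h1).
have [b2 e2] := polyOver1P (@Balpha_polyOver1 F L n2 alpha h2).
exists b1, b2; split; [by rewrite e1 | by rewrite e2 |].
rewrite -(dvdp_map (in_alg L)) rmorphB /= -e1 -e2.
apply: prod_cong => s _; exact: (@Beval_cong F L m d n1 n2 _ mon irr sm h1 h2 e).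
Qed.
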